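(* Let $d_1,d_2\ge 2$ and let $\rho$ be a separable state on $\mathbb{C}^{d_1}\otimes\mathbb{C}^{d_2}$, written in Bloch form \[ \rho=\frac{1}{d_1d_2}I_{d_1}\otimes I_{d_2}+\sum_{i=1}^{d_1^2-1}r_i\lambda_i^{(d_1)}\otimes I_{d_2}+\sum_{j=1}^{d_2^2-1}s_j I_{d_1}\otimes\lambda_j^{(d_2)}+\sum_{i=1}^{d_1^2-1}\sum_{j=1}^{d_2^2-1}T_{ij}\lambda_i^{(d_1)}\otimes\lambda_j^{(d_2)}. \] Let $a_k={\rm Tr}\big((TT^{\dagger})^{k/2}\big)$ and $b_k={\rm Tr}\big((\tilde T\tilde T^{\dagger})^{k/2}\big)$. Then \[ a_2^2\le \frac{\sqrt{(d_1^2-d_1)(d_2^2-d_2)}}{2d_1d_2}\,a_3, \qquad b_2^2\le \frac{\sqrt{(2+d_1^2-d_1)(2+d_2^2-d_2)}}{2d_1d_2}\,b_3 . \]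
   Context: For $d\ge2$, $\lambda_1^{(d)},\dots,\lambda_{d^2-1}^{(d)}$ are traceless Hermitian generators of $\mathfrak{su}(d)$ with ${\rm Tr}(\lambda_i^{(d)}\lambda_j^{(d)})=2\delta_{ij}$. The Bloch coefficients of a state $\rho$ on $\mathbb{C}^{d_1}\otimes\mathbb{C}^{d_2}$ are $r_i=\frac{1}{2d_2}{\rm Tr}(\rho\,\lambda_i^{(d_1)}\otimes I_{d_2})$, $s_j=\frac{1}{2d_1}{\rm Tr}(\rho\, I_{d_1}\otimes\lambda_j^{(d_2)})$, $T_{ij}=\frac14{\rm Tr}(\rho\,\lambda_i^{(d_1)}\otimes\lambda_j^{(d_2)})$. The correlation matrix is $T=(T_{ij})$, of size $(d_1^2-1)\times(d_2^2-1)$. With $\mathbf r=(r_1,\dots,r_{d_1^2-1})^t$ and $\mathbf s=(s_1,\dots,s_{d_2^2-1})^t$, the canonical correlation matrix is the $d_1^2\times d_2^2$ matrix $\tilde T=\begin{pmatrix}\frac{1}{d_1d_2}&\mathbf s^t\\ \mathbf r& T\end{pmatrix}$. A state is separable if it is a convex combination of product states $\rho_A\otimes\rho_B$. *)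

(* Defs.v *)
From mathcomp Require Import all_boot all_order all_algebra.
From mathcomp Require mxtens.
Set Implicit Arguments. Unset Strict Implicit. Unset Printing Implicit Defensive.
Import Order.TTheory GRing.Theory Num.Theory.
Local Open Scope ring_scope.

(* Complex scalars: an arbitrary numClosedFieldType C (e.g. the complex numbers). *)

Definition adjmx {C : numClosedFieldType} {m n : nat} (A : 'M[C]_(m, n)) : 'M[C]_(n, m) :=
  map_mx Num.conj A^T.

Definition kron {C : numClosedFieldType} {m n p q : nat}
  (A : 'M[C]_(m, n)) (B : 'M[C]_(p, q)) : 'M[C]_(m * p, n * q) :=
  mxtens.tensmx A B.

Definition hermitian {C : numClosedFieldType} {n : nat} (A : 'M[C]_n) : Prop :=
  adjmx A = A.

Definition psd {C : numClosedFieldType} {n : nat} (A : 'M[C]_n) : Prop :=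
  hermitian A /\ forall v : 'cV[C]_n, 0 <= (adjmx v *m A *m v) 0 0.

Definition density {C : numClosedFieldType} {n : nat} (A : 'M[C]_n) : Prop :=
  psd A /\ \tr A = 1.

Definition separable {C : numClosedFieldType} {d1 d2 : nat}
  (rho : 'M[C]_(d1 * d2)) : Prop :=
  exists (N : nat) (p : 'I_N -> C) (A : 'I_N -> 'M[C]_d1) (B : 'I_N -> 'M[C]_d2),
    [/\ forall k, 0 <= p k, \sum_k p k = 1,
        forall k, density (A k), forall k, density (B k) &
        rho = \sum_k p k *: kron (A k) (B k)].

Definition su_generators {C : numClosedFieldType} (d : nat)
  (lam : 'I_(d ^ 2 - 1) -> 'M[C]_d) : Prop :=
  [/\ forall i, hermitian (lam i), forall i, \tr (lam i) = 0 &
      forall i j, \tr (lam i *m lam j) = (i == j)%:R *+ 2].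

Definition bloch_r {C : numClosedFieldType} {d1 d2 : nat}
  (l1 : 'I_(d1 ^ 2 - 1) -> 'M[C]_d1) (rho : 'M[C]_(d1 * d2)) : 'cV[C]_(d1 ^ 2 - 1) :=
  \col_i ((2 * d2%:R)^-1 * \tr (rho *m kron (l1 i) (1%:M : 'M[C]_d2))).

Definition bloch_s {C : numClosedFieldType} {d1 d2 : nat}
  (l2 : 'I_(d2 ^ 2 - 1) -> 'M[C]_d2) (rho : 'M[C]_(d1 * d2)) : 'cV[C]_(d2 ^ 2 - 1) :=
  \col_j ((2 * d1%:R)^-1 * \tr (rho *m kron (1%:M : 'M[C]_d1) (l2 j))).

Definition corr_T {C : numClosedFieldType} {d1 d2 : nat}
  (l1 : 'I_(d1 ^ 2 - 1) -> 'M[C]_d1) (l2 : 'I_(d2 ^ 2 - 1) -> 'M[C]_d2)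
  (rho : 'M[C]_(d1 * d2)) : 'M[C]_(d1 ^ 2 - 1, d2 ^ 2 - 1) :=
  \matrix_(i, j) (4^-1 * \tr (rho *m kron (l1 i) (l2 j))).

Definition corr_Ttilde {C : numClosedFieldType} {d1 d2 : nat}
  (l1 : 'I_(d1 ^ 2 - 1) -> 'M[C]_d1) (l2 : 'I_(d2 ^ 2 - 1) -> 'M[C]_d2)
  (rho : 'M[C]_(d1 * d2)) : 'M[C]_(1 + (d1 ^ 2 - 1), 1 + (d2 ^ 2 - 1)) :=
  block_mx ((d1%:R * d2%:R)^-1)%:M (bloch_s l2 rho)^T
           (bloch_r l1 rho) (corr_T l1 l2 rho).

(* S is the (unique) positive semidefinite square root of the psd matrix M,
   i.e. S = M^(1/2); then (M)^(k/2) = S^k *)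
Definition psd_sqrt_of {C : numClosedFieldType} {n : nat} (M S : 'M[C]_n) : Prop :=
  psd S /\ S *m S = M.

(* Main.v *)
Require Import Defs.
From mathcomp Require Import all_boot all_order all_algebra.
From mathcomp Require Import spectral sesquilinear.
From mathcomp Require Import ring.
From mathcomp Require mxtens.
Import Order.TTheory GRing.Theory Num.Theory.
Local Open Scope ring_scope.
Local Open Scope sesquilinear_scope.

Section Basic.
Variable C : numClosedFieldType.

Lemma adjmx_mul m n p (A : 'M[C]_(m,n)) (B : 'M[C]_(n,p)) :
  adjmx (A *m B) = adjmx B *m adjmx A.
Proof. by rewrite /adjmx trmx_mul map_mxM. Qed.

Lemma adjmxK m n (A : 'M[C]_(m,n)) : adjmx (adjmx A) = A.
Proof. exact: trmxCK. Qed.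

Lemma adjmxD m n (A B : 'M[C]_(m,n)) : adjmx (A + B) = adjmx A + adjmx B.
Proof. by apply/matrixP=> i j; rewrite !mxE rmorphD. Qed.

Lemma adjmxN m n (A : 'M[C]_(m,n)) : adjmx (- A) = - adjmx A.
Proof. by apply/matrixP=> i j; rewrite !mxE rmorphN. Qed.

Lemma adjmxZ m n a (A : 'M[C]_(m,n)) : adjmx (a *: A) = a^* *: adjmx A.
Proof. by apply/matrixP=> i j; rewrite !mxE rmorphM. Qed.

Lemma adjmx_sum m n I (r : seq I) (P : pred I) (F : I -> 'M[C]_(m,n)) :
  adjmx (\sum_(i <- r | P i) F i) = \sum_(i <- r | P i) adjmx (F i).
Proof.
elim/big_rec2: _ => [|i x y _ <-]; last by rewrite adjmxD.
by apply/matrixP=> i j; rewrite !mxE rmorph0.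
Qed.

Lemma adjmx1 n : adjmx (1%:M : 'M[C]_n) = 1%:M.
Proof. by apply/matrixP=> i j; rewrite !mxE eq_sym; case: eqP; rewrite ?rmorph1 ?rmorph0. Qed.

Lemma adjmx_diag n (s : 'rV[C]_n) : adjmx (diag_mx s) = diag_mx (map_mx Num.conj s).
Proof.
apply/matrixP=> i j; rewrite !mxE eq_sym; case: eqP => [->|]; rewrite ?mulr1n ?mulr0n ?rmorph0 //.
Qed.

Lemma tr_adj n (A : 'M[C]_n) : \tr (adjmx A) = (\tr A)^*.
Proof. by rewrite /mxtrace rmorph_sum; apply: eq_bigr => i _; rewrite !mxE. Qed.

Lemma diag_entry n (A : 'M[C]_n) i :
  ((delta_mx 0 i : 'rV[C]_n) *m A *m (delta_mx i 0 : 'cV[C]_n)) 0 0 = A i i.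
Proof. by rewrite -rowE -colE !mxE. Qed.

Lemma adj_delta n (i : 'I_n) : adjmx (delta_mx i 0 : 'cV[C]_n) = delta_mx 0 i.
Proof.
apply/matrixP=> a b; rewrite !mxE; case: (_ == _); case: (_ == _); by rewrite /= ?rmorph1 ?rmorph0.
Qed.

Lemma psd_spectral n (S : 'M[C]_n) : psd S ->
  exists (P : 'M[C]_n) (s : 'rV[C]_n),
    [/\ P *m adjmx P = 1%:M, adjmx P *m P = 1%:M, forall i, 0 <= s 0 i &
        S = adjmx P *m diag_mx s *m P].
Proof.
case=> hS posS.
have nS : S \is normalmx by apply/normalmxP; rewrite -[S^t*]/(adjmx S) hS.
move/orthomx_spectralP: nS.
have Pu := spectral_unitarymx S.
rewrite invmx_unitary // => eS.
set P := spectralmx S in Pu eS; set s := spectral_diag S in eS.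
have h1 : P *m adjmx P = 1%:M by apply/unitarymxP.
have h2 : adjmx P *m P = 1%:M by rewrite -[adjmx P]mul1mx; apply: mulmxKtV.
exists P, s; split => // i.
have := posS (adjmx P *m delta_mx i 0).
rewrite adjmx_mul adjmxK adj_delta eS.
have -> : (delta_mx 0 i : 'rV[C]_n) *m P *m (P^t* *m diag_mx s *m P) *m (P^t* *m (delta_mx i 0 : 'cV[C]_n)) = 
  delta_mx 0 i *m (P *m P^t*) *m diag_mx s *m (P *m P^t*) *m delta_mx i 0.
  by rewrite !mulmxA.
rewrite -[P^t*]/(adjmx P) h1 !mulmx1.
by rewrite diag_entry mxE eqxx mulr1n.
Qed.

End Basic.


Section Key.
Variable C : numClosedFieldType.

Lemma cs_sum n (s : 'I_n -> C) : (forall i, 0 <= s i) ->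
  (\sum_i s i ^+ 2) ^+ 2 <= (\sum_i s i) * (\sum_i s i ^+ 3).
Proof.
move=> s0.
pose f i j := s i * s j ^+ 3 - s i ^+ 2 * s j ^+ 2.
have F : (\sum_i s i) * (\sum_i s i ^+ 3) - (\sum_i s i ^+ 2) ^+ 2
         = \sum_i \sum_j f i j.
  rewrite expr2 !big_distrlr /= -sumrB; apply: eq_bigr => i _.
  by rewrite -sumrB; apply: eq_bigr => j _; rewrite /f; ring.
rewrite -subr_ge0 F -(pmulrn_lge0 _ (isT : (0 < 2)%N)) mulr2n.
rewrite [X in _ + X](exchange_big) /= -big_split /=.
apply: sumr_ge0 => i _; rewrite -big_split /=; apply: sumr_ge0 => j _.
have -> : f i j + f j i = s i * s j * (s i - s j) ^+ 2 by rewrite /f; ring.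
apply: mulr_ge0; first exact: mulr_ge0.
by rewrite -realEsqr rpredB // ger0_real.
Qed.


Lemma pow_conj n (P : 'M[C]_n) (s : 'rV[C]_n) k :
  P *m adjmx P = 1%:M -> adjmx P *m P = 1%:M ->
  (adjmx P *m diag_mx s *m P) ^+ k = adjmx P *m diag_mx (\row_i (s 0 i ^+ k)) *m P.
Proof.
move=> h1 h2; elim: k => [|k IH].
  rewrite expr0 (_ : diag_mx _ = 1%:M); last first.
    by apply/matrixP=> i j; rewrite !mxE expr0.
  by rewrite mulmx1 h2.
rewrite exprS IH -mulmxE.
have -> : adjmx P *m diag_mx s *m P *m (adjmx P *m diag_mx (\row_i s 0 i ^+ k) *m P)
  = adjmx P *m diag_mx s *m (P *m adjmx P) *m diag_mx (\row_i s 0 i ^+ k) *m P.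
  by rewrite !mulmxA.
rewrite h1 mulmx1 -(mulmxA _ (diag_mx s)) mulmx_diag; congr (_ *m diag_mx _ *m _).
by apply/rowP=> i; rewrite !mxE exprS.
Qed.

Lemma tr_conj n (P : 'M[C]_n) (X : 'M[C]_n) :
  P *m adjmx P = 1%:M -> \tr (adjmx P *m X *m P) = \tr X.
Proof. by move=> h1; rewrite mxtrace_mulC mulmxA h1 mul1mx. Qed.


Lemma inv_real (x : C) : 0 <= x -> (x^-1)^* = x^-1.
Proof. by move=> x0; rewrite fmorphV; congr (_^-1); apply/CrealP; rewrite ger0_real. Qed.

Lemma entryB m n (A B : 'M[C]_(m,n)) i j : (A - B) i j = A i j - B i j.
Proof. by rewrite !mxE. Qed.

Lemma proj_bound n (Q : 'M[C]_n) (x : 'rV[C]_n) :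
  Q *m Q = Q -> adjmx Q = Q -> (x *m Q *m adjmx x) 0 0 <= dotmx x x.
Proof.
move=> hQQ hQ; rewrite -subr_ge0.
have -> : dotmx x x - (x *m Q *m adjmx x) 0 0
    = dotmx (x *m (1%:M - Q)) (x *m (1%:M - Q)).
  rewrite !dotmxE -!/(adjmx _) adjmx_mul adjmxD adjmxN adjmx1 hQ.
  have e : (1%:M - Q) *m (1%:M - Q) = 1%:M - Q.
    by rewrite mulmxBl mul1mx mulmxBr mulmx1 hQQ subrr subr0.
  by rewrite [in RHS]mulmxA -[in RHS](mulmxA x) e mulmxBr mulmx1 mulmxBl entryB.
exact: dnorm_ge0.
Qed.

Lemma key_sum m n N (p : 'I_N -> C) (u : 'I_N -> 'rV[C]_m) (v : 'I_N -> 'rV[C]_n)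
  (K : C) (M : 'M[C]_(m, n)) (P : 'M[C]_m) (s : 'rV[C]_m) :
  (forall k, 0 <= p k) -> \sum_k p k = 1 -> 0 <= K ->
  (forall k, dotmx (u k) (u k) * dotmx (v k) (v k) <= K ^+ 2) ->
  M = \sum_k p k *: ((u k)^T *m v k) ->
  P *m adjmx P = 1%:M -> adjmx P *m P = 1%:M -> (forall i, 0 <= s 0 i) ->
  M *m adjmx M = adjmx P *m diag_mx (\row_i (s 0 i ^+ 2)) *m P ->
  \sum_i s 0 i <= K.
Proof.
move=> p0 p1 K0 uvK eM h1 h2 s0 eMM.
set D := diag_mx s.
pose T' := P *m M.
pose Dp := diag_mx (\row_i (s 0 i)^-1).
pose W := Dp *m T'.
have hTT : T' *m adjmx T' = diag_mx (\row_i (s 0 i ^+ 2)).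
  rewrite /T' adjmx_mul mulmxA -(mulmxA P) eMM !mulmxA h1 mul1mx -mulmxA h1.
  by rewrite mulmx1.
have hDp : adjmx Dp = Dp.
  by rewrite /Dp adjmx_diag; congr diag_mx; apply/rowP => i; rewrite !mxE inv_real.
have trD : \sum_i s 0 i = \tr (T' *m adjmx W).
  rewrite /W adjmx_mul hDp mulmxA hTT mulmx_diag mxtrace_diag.
  apply: eq_bigr => i _; rewrite !mxE.
  have [->|nz] := eqVneq (s 0 i) 0; first by rewrite invr0 mulr0.
  by rewrite expr2 mulfK.
pose E := diag_mx (\row_i (s 0 i ^+ 2 * (s 0 i)^-1 * (s 0 i)^-1)).
have hWW : W *m adjmx W = E.
  rewrite /W adjmx_mul hDp mulmxA -(mulmxA Dp) hTT !mulmx_diag.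
  by rewrite /E; apply/matrixP => i j; rewrite !mxE; congr (_ *+ _); ring.
have hEW : E *m W = W.
  rewrite /W mulmxA /E mulmx_diag; congr (diag_mx _ *m _); apply/rowP => i; rewrite !mxE.
  have [->|nz] := eqVneq (s 0 i) 0; first by rewrite invr0 !mulr0.
  by rewrite expr2 mulfK // divff // mul1r.
pose Q := adjmx W *m W.
have hQQ : Q *m Q = Q by rewrite /Q mulmxA -(mulmxA _ W) hWW -mulmxA hEW.
have hQ : adjmx Q = Q by rewrite /Q adjmx_mul adjmxK.
have eQ : Q = adjmx W *m W by [].
clearbody Q W.
have bnd_a : forall x : 'rV[C]_n, dotmx (x *m adjmx W) (x *m adjmx W) <= dotmx x x.
  move=> x; rewrite dotmxE -/(adjmx _) adjmx_mul adjmxK mulmxA -(mulmxA x) -eQ.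
  exact: proj_bound.
have trsum : \tr (T' *m adjmx W) =
    \sum_k p k * dotmx (v k *m adjmx W) (adjmx (P *m (u k)^T)).
  rewrite /T' eM mulmx_sumr mulmx_suml linear_sum /=.
  apply: eq_bigr => k _; rewrite -scalemxAr -scalemxAl mxtraceZ; congr (_ * _).
  rewrite dotmxE -/(adjmx _) adjmxK !mulmxA -(mulmxA (P *m (u k)^T)).
  by rewrite mxtrace_mulC trace_mx11 !mulmxA.
have bz : forall k, `|dotmx (v k *m adjmx W) (adjmx (P *m (u k)^T))| <= K.
  move=> k; set a := v k *m adjmx W; set b := adjmx (P *m (u k)^T).
  have eb : dotmx b b = dotmx (u k) (u k).
    rewrite !dotmxE -!/(adjmx _) /b adjmxK adjmx_mul -mulmxA (mulmxA (adjmx P)) h2 mul1mx.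
    by rewrite !mxE; apply: eq_bigr => j _; rewrite !mxE mulrC.
  rewrite -(ler_sqr) ?nnegrE //.
  apply: (@le_trans _ _ (dotmx a a * dotmx b b)).
    exact: (CauchySchwarz (@dotmx C _) a b).1.
  rewrite eb mulrC; apply: le_trans (uvK k).
  by apply: ler_wpM2l; [exact: dnorm_ge0 | exact: bnd_a].
have ge : 0 <= \sum_i s 0 i by apply: sumr_ge0 => i _.
rewrite -(ger0_norm ge) trD trsum.
apply: le_trans (ler_norm_sum _ _ _) _.
apply: (@le_trans _ _ (\sum_k p k * K)).
  by apply: ler_sum => k _; rewrite normrM ger0_norm // ler_wpM2l.
by rewrite -mulr_suml p1 mul1r.
Qed.

Lemma key m n N (p : 'I_N -> C) (u : 'I_N -> 'rV[C]_m) (v : 'I_N -> 'rV[C]_n)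
  (K : C) (M : 'M[C]_(m, n)) (S : 'M[C]_m) :
  (forall k, 0 <= p k) -> \sum_k p k = 1 -> 0 <= K ->
  (forall k, dotmx (u k) (u k) * dotmx (v k) (v k) <= K ^+ 2) ->
  M = \sum_k p k *: ((u k)^T *m v k) ->
  psd_sqrt_of (M *m adjmx M) S ->
  (\tr (M *m adjmx M)) ^+ 2 <= K * \tr (S ^+ 3).
Proof.
move=> p0 p1 K0 uvK eM [Spsd SS].
have [P [s [h1 h2 s0 eS]]] := @psd_spectral C m S Spsd.
have ek k : S ^+ k = adjmx P *m diag_mx (\row_i (s 0 i ^+ k)) *m P.
  by rewrite eS pow_conj.
have trk k : \tr (S ^+ k) = \sum_i s 0 i ^+ k.
  by rewrite ek tr_conj // mxtrace_diag; apply: eq_bigr => i _; rewrite mxE.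
have eMM : M *m adjmx M = adjmx P *m diag_mx (\row_i s 0 i ^+ 2) *m P.
  by rewrite -SS mulmxE -expr2 ek.
have hs := @key_sum m n N p u v K M P s p0 p1 K0 uvK eM h1 h2 s0 eMM.
rewrite -SS mulmxE -expr2 !trk.
apply: le_trans (@cs_sum m (fun i => s 0 i) s0) _.
apply: ler_wpM2r => //; apply: sumr_ge0 => i _; exact: exprn_ge0.
Qed.

End Key.


Section Bloch.
Variable C : numClosedFieldType.

Lemma tr_kron m n (A : 'M[C]_m) (B : 'M[C]_n) : \tr (kron A B) = \tr A * \tr B.
Proof.
rewrite /mxtrace mxtens.mulr_sum; apply: eq_bigr => k _; rewrite /kron /mxtens.tensmx mxE //.
Qed.

Lemma tr_sq_le n (A : 'M[C]_n) : density A -> \tr (A *m A) <= 1.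
Proof.
case=> hA trA.
have [P [s [h1 h2 s0 eS]]] := @psd_spectral C n A hA.
have e2 : A *m A = adjmx P *m diag_mx (\row_i (s 0 i ^+ 2)) *m P.
  by rewrite mulmxE -expr2 eS pow_conj.
have t1 : \sum_i s 0 i = 1.
  by rewrite -trA eS tr_conj // mxtrace_diag.
rewrite e2 tr_conj // mxtrace_diag.
apply: (@le_trans _ _ (\sum_i s 0 i * \sum_j s 0 j)).
  apply: ler_sum => i _; rewrite mxE expr2 ler_wpM2l //.
  rewrite (bigD1 i) //= lerDl; apply: sumr_ge0 => j _; exact: s0.
by rewrite -mulr_suml t1 mul1r.
Qed.

Lemma mxtraceB n (A B : 'M[C]_n) : \tr (A - B) = \tr A - \tr B.
Proof. by rewrite linearB. Qed.

Lemma mxtraceZ' n a (A : 'M[C]_n) : \tr (a *: A) = a * \tr A.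
Proof. by rewrite linearZ. Qed.

Lemma tr_adj_ge0 n (Y : 'M[C]_n) : 0 <= \tr (adjmx Y *m Y).
Proof.
apply: sumr_ge0 => i _; rewrite mxE; apply: sumr_ge0 => j _.
by rewrite !mxE mulrC mul_conjC_ge0.
Qed.


Definition bvec {d : nat} (l : 'I_(d ^ 2 - 1) -> 'M[C]_d) (A : 'M[C]_d) :
  'rV[C]_(d ^ 2 - 1) := \row_i (\tr (A *m l i) / 2).

Lemma tr_real d (l : 'I_(d ^ 2 - 1) -> 'M[C]_d) (A : 'M[C]_d) i :
  su_generators l -> Defs.hermitian A -> \tr (A *m l i) \is Num.real.
Proof.
case=> hl _ _ hA; apply/CrealP.
by rewrite -tr_adj adjmx_mul hA hl mxtrace_mulC.
Qed.

Lemma bessel d (l : 'I_(d ^ 2 - 1) -> 'M[C]_d) (A : 'M[C]_d) :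
  (0 < d)%N -> su_generators l -> density A ->
  \sum_i (\tr (A *m l i)) ^+ 2 / 2 <= 1 - d%:R^-1.
Proof.
move=> d0 hl dA; have [[hA _] trA] := dA.
have [hlh hl0 hll] := hl.
pose c i := \tr (A *m l i).
have cr i : c i \is Num.real by exact: tr_real.
pose X := A - d%:R^-1 *: 1%:M.
pose L := \sum_i (c i / 2) *: l i.
pose Y := X - L.
have hX : adjmx X = X by rewrite /X adjmxD adjmxN adjmxZ adjmx1 hA conj_Creal // rpredV realn.
have hL : adjmx L = L.
  rewrite /L adjmx_sum; apply: eq_bigr => i _.
  by rewrite adjmxZ hlh conj_Creal // rpred_div ?realn.
have hY : adjmx Y = Y by rewrite /Y adjmxD adjmxN hX hL.
have tXl i : \tr (X *m l i) = c i.
  by rewrite /X mulmxBl linearB /= -scalemxAl mul1mx linearZ /= hl0 mulr0 subr0.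
have tXL : \tr (X *m L) = \sum_i c i ^+ 2 / 2.
  rewrite /L mulmx_sumr linear_sum; apply: eq_bigr => i _.
  by rewrite -scalemxAr linearZ /= tXl expr2 mulrC mulrA.
have tLX : \tr (L *m X) = \sum_i c i ^+ 2 / 2 by rewrite mxtrace_mulC.
have tLL : \tr (L *m L) = \sum_i c i ^+ 2 / 2.
  rewrite {1}/L mulmx_suml linear_sum; apply: eq_bigr => i _.
  rewrite -scalemxAl linearZ /= /L mulmx_sumr linear_sum (bigD1 i) //= big1 => [|j nji].
    by rewrite addr0 -scalemxAr linearZ /= hll eqxx mulr1n; field.
  by rewrite -scalemxAr linearZ /= hll eq_sym (negPf nji) mulr0n mul0rn mulr0.
have tXX : \tr (X *m X) = \tr (A *m A) - d%:R^-1.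
  rewrite /X mulmxBl !mulmxBr !mxtraceB -!scalemxAl -!scalemxAr.
  rewrite !mul1mx !mulmx1 !mxtraceZ' trA mxtrace1 mulr1.
  have dn : (d%:R : C) != 0 by rewrite pnatr_eq0 -lt0n.
  by field.
have := @tr_adj_ge0 d Y; rewrite hY /Y.
clearbody X L.
rewrite mulmxBl !mulmxBr !mxtraceB tXX tXL tLX tLL.
move=> h; have := @tr_sq_le d A dA => h1.
rewrite -subr_ge0; apply: le_trans h _.
rewrite -subr_ge0.
have -> : 1 - d%:R^-1 - \sum_i \tr (A *m l i) ^+ 2 / 2 -
  (\tr (A *m A) - d%:R^-1 - \sum_i c i ^+ 2 / 2 - (\sum_i c i ^+ 2 / 2 - \sum_i c i ^+ 2 / 2))
  = 1 - \tr (A *m A) by rewrite /c; ring.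
by rewrite subr_ge0.
Qed.


Lemma bvec_norm d (l : 'I_(d ^ 2 - 1) -> 'M[C]_d) (A : 'M[C]_d) :
  (0 < d)%N -> su_generators l -> density A ->
  dotmx (bvec l A) (bvec l A) <= (1 - d%:R^-1) / 2.
Proof.
move=> d0 hl dA.
have hb := @bessel d l A d0 hl dA.
have [[hA _] _] := dA.
have -> : dotmx (bvec l A) (bvec l A) = (\sum_i \tr (A *m l i) ^+ 2 / 2) / 2.
  rewrite dotmxE mxE mulr_suml; apply: eq_bigr => i _.
  rewrite !mxE conj_Creal; first by field.
  by rewrite rpred_div ?realn ?tr_real.
by rewrite ler_wpM2r // invr_ge0 ler0n.
Qed.

Lemma outer_entry m n (u : 'rV[C]_m) (v : 'rV[C]_n) i j :
  (u^T *m v) i j = u 0 i * v 0 j.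
Proof. by rewrite !mxE big_ord1 !mxE. Qed.

Lemma tr_rho_kron d1 d2 N (p : 'I_N -> C) (A : 'I_N -> 'M[C]_d1) (B : 'I_N -> 'M[C]_d2)
  (X : 'M[C]_d1) (Y : 'M[C]_d2) :
  \tr ((\sum_k p k *: kron (A k) (B k)) *m kron X Y) =
  \sum_k p k * (\tr (A k *m X) * \tr (B k *m Y)).
Proof.
rewrite mulmx_suml linear_sum /=; apply: eq_bigr => k _.
by rewrite -scalemxAl mxtraceZ' /kron mxtens.tensmx_mul -/(kron _ _) tr_kron.
Qed.

Lemma corr_T_eq d1 d2 (l1 : 'I_(d1 ^ 2 - 1) -> 'M[C]_d1) (l2 : 'I_(d2 ^ 2 - 1) -> 'M[C]_d2)
  N (p : 'I_N -> C) (A : 'I_N -> 'M[C]_d1) (B : 'I_N -> 'M[C]_d2) :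
  corr_T l1 l2 (\sum_k p k *: kron (A k) (B k)) =
  \sum_k p k *: ((bvec l1 (A k))^T *m bvec l2 (B k)).
Proof.
apply/matrixP => i j; rewrite mxE summxE tr_rho_kron mulr_sumr.
apply: eq_bigr => k _; rewrite mxE outer_entry !mxE.
by field.
Qed.

End Bloch.


Section Final.
Variable C : numClosedFieldType.

Lemma nat_sq (d : nat) : (0 < d)%N -> (d%:R ^+ 2 - d%:R : C) = (d * d.-1)%:R.
Proof.
by case: d => // n _; rewrite /= natrM -addn1 natrD; ring.
Qed.

Lemma dotmx_row m n (a : 'rV[C]_m) (b : 'rV[C]_n) :
  dotmx (row_mx a b) (row_mx a b) = dotmx a a + dotmx b b.
Proof. by rewrite !dotmxE tr_row_mx map_col_mx mul_row_col mxE. Qed.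

Lemma dotmx_const (x : C) : x \is Num.real ->
  dotmx (const_mx x : 'rV[C]_1) (const_mx x) = x ^+ 2.
Proof. by move=> xr; rewrite dotmxE !mxE big_ord1 !mxE conj_Creal. Qed.

Lemma scale_entry m n a (A : 'M[C]_(m,n)) i j : (a *: A) i j = a * A i j.
Proof. by rewrite mxE. Qed.

End Final.

Theorem theorem1 (C : numClosedFieldType) (d1 d2 : nat)
  (l1 : 'I_(d1 ^ 2 - 1) -> 'M[C]_d1) (l2 : 'I_(d2 ^ 2 - 1) -> 'M[C]_d2)
  (rho : 'M[C]_(d1 * d2))
  (S : 'M[C]_(d1 ^ 2 - 1)) (St : 'M[C]_(1 + (d1 ^ 2 - 1))) :
  (2 <= d1)%N -> (2 <= d2)%N ->
  su_generators l1 -> su_generators l2 ->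
  density rho -> separable rho ->
  psd_sqrt_of (corr_T l1 l2 rho *m adjmx (corr_T l1 l2 rho)) S ->
  psd_sqrt_of (corr_Ttilde l1 l2 rho *m adjmx (corr_Ttilde l1 l2 rho)) St ->
  (\tr (corr_T l1 l2 rho *m adjmx (corr_T l1 l2 rho))) ^+ 2
    <= sqrtC ((d1%:R ^+ 2 - d1%:R) * (d2%:R ^+ 2 - d2%:R)) / (2 * d1%:R * d2%:R)
       * \tr (S ^+ 3)
  /\
  (\tr (corr_Ttilde l1 l2 rho *m adjmx (corr_Ttilde l1 l2 rho))) ^+ 2
    <= sqrtC ((2 + d1%:R ^+ 2 - d1%:R) * (2 + d2%:R ^+ 2 - d2%:R)) / (2 * d1%:R * d2%:R)
       * \tr (St ^+ 3).
Proof.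
move=> hd1 hd2 hl1 hl2 drho [N [p [A [B [p0 p1 dA dB erho]]]]] hS hSt.
have d1p : (0 < d1)%N by apply: leq_trans hd1.
have d2p : (0 < d2)%N by apply: leq_trans hd2.
have nz1 : (d1%:R : C) != 0 by rewrite pnatr_eq0 -lt0n.
have nz2 : (d2%:R : C) != 0 by rewrite pnatr_eq0 -lt0n.
have den0 : 0 <= 2 * (d1%:R : C) * d2%:R by rewrite !mulr_ge0 ?ler0n.
split.
  set K := sqrtC _ / _.
  have K0 : 0 <= K.
    by rewrite /K divr_ge0 // sqrtC_ge0 !nat_sq // -natrM ler0n.
  have eK : K ^+ 2 = (1 - d1%:R^-1) / 2 * ((1 - d2%:R^-1) / 2).
    rewrite /K expr_div_n sqrtCK; field; rewrite ?nz1 ?nz2 //.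
  apply: (@key C _ _ N p (fun k => @bvec C _ l1 (A k)) (fun k => @bvec C _ l2 (B k)) K _ S p0 p1 K0 _ _ hS).
    move=> k; rewrite eK; apply: ler_pM; try exact: dnorm_ge0.
      exact: bvec_norm.
    exact: bvec_norm.
  by rewrite erho corr_T_eq.
set K := sqrtC _ / _.
have K0 : 0 <= K.
  by rewrite /K divr_ge0 // sqrtC_ge0 -!addrA !nat_sq // mulr_ge0 ?addr_ge0 ?ler0n.
pose a1 : C := d1%:R^-1 ^+ 2 + (1 - d1%:R^-1) / 2.
pose a2 : C := d2%:R^-1 ^+ 2 + (1 - d2%:R^-1) / 2.
have eK : K ^+ 2 = a1 * a2.
  rewrite /K /a1 /a2 expr_div_n sqrtCK; field; rewrite ?nz1 ?nz2 //.
pose ut k := row_mx (const_mx d1%:R^-1 : 'rV[C]_1) (@bvec C _ l1 (A k)).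
pose vt k := row_mx (const_mx d2%:R^-1 : 'rV[C]_1) (@bvec C _ l2 (B k)).
have r1 : (d1%:R^-1 : C) \is Num.real by rewrite rpredV realn.
have r2 : (d2%:R^-1 : C) \is Num.real by rewrite rpredV realn.
apply: (@key C _ _ N p ut vt K _ St p0 p1 K0 _ _ hSt).
  move=> k; rewrite eK /ut /vt !dotmx_row !dotmx_const //.
  apply: ler_pM.
  - by rewrite addr_ge0 ?dnorm_ge0 // -realEsqr.
  - by rewrite addr_ge0 ?dnorm_ge0 // -realEsqr.
  - by rewrite lerD2l; apply: bvec_norm.
  - by rewrite lerD2l; apply: bvec_norm.
have trA k : \tr (A k) = 1 by case: (dA k).
have trB k : \tr (B k) = 1 by case: (dB k).
apply/matrixP => i j; rewrite summxE.
rewrite -[i]splitK -[j]splitK.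
case: (split i) => [i'|i']; case: (split j) => [j'|j'] /=.
  rewrite block_mxEul !mxE !ord1 eqxx mulr1n.
  under eq_bigr => k _ do rewrite mxE outer_entry /ut /vt row_mxEl row_mxEl !mxE.
  by rewrite -mulr_suml p1 mul1r invfM.
- rewrite block_mxEur !mxE erho tr_rho_kron mulr_sumr.
  apply: eq_bigr => k _; rewrite mxE outer_entry /ut /vt row_mxEl row_mxEr !mxE.
  rewrite mulmx1 trA; field; by rewrite ?nz1.
- rewrite block_mxEdl !mxE erho tr_rho_kron mulr_sumr.
  apply: eq_bigr => k _; rewrite mxE outer_entry /ut /vt row_mxEr row_mxEl !mxE.
  rewrite mulmx1 trB; field; by rewrite ?nz2.
- rewrite block_mxEdr erho corr_T_eq summxE.
  by apply: eq_bigr => k _; rewrite !scale_entry !outer_entry /ut /vt !row_mxEr.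
Qed.
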